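(* Let $\mathcal{L}$ be a base in a set $X$. Then for every $\alpha<\omega_1$, $\mathcal{L}(T_\alpha)=D_\alpha(\mathcal{L})$, where a set $A\subseteq X$ is identified with the $2$-partition $X\to 2$ given by its characteristic function.
   Context: A base in $X$ is a collection $\mathcal{L}$ of subsets of $X$ closed under finite intersections and countable unions (including the empty intersection $X$ and the empty union $\emptyset$). An ordinal $\alpha=\lambda+n$ ($\lambda$ zero or limit, $n<\omega$) is even if $n$ is even and odd otherwise; $r(\alpha)=0$ if even, $1$ otherwise. $D_\alpha(\{A_\beta\}_{\beta<\alpha})=\bigcup\{A_\beta\setminus\bigcup_{\gamma<\beta}A_\gamma\mid\beta<\alpha,\ r(\beta)\neq r(\alpha)\}$, and $D_\alpha(\mathcal{L})$ is the set of all such sets with all $A_\beta\in\mathcal{L}$. A (countable) forest is a countable poset without infinite chains in which every upper cone $\{y\mid x\leq y\}$ is a chain; a tree is a forest with a greatest element (root). A $k$-forest is a forest $(P;\leq)$ with a labeling $c:P\to k=\{0,\dots,k-1\}$. For a $k$-forest $F$ and $i<k$, $p_i(F)$ is the $k$-tree obtained by adding a new greatest element labeled $i$; $F_0\sqcup F_1\sqcup\cdots$ is the disjoint union; for a $2$-forest $F$, $\overline{F}$ is obtained by replacing every label $l$ by $1-l$. The $2$-trees $T_\alpha$, $\alpha<\omega_1$: $T_0$ is a single node labeled $0$; $T_{\alpha+1}=p_0(\overline{T}_\alpha)$; for limit $\lambda$, $T_\lambda=p_0(\overline{T}_{\alpha_0}\sqcup\overline{T}_{\alpha_1}\sqcup\cdots)$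 for some (any) sequence $\alpha_0<\alpha_1<\cdots$ of odd ordinals with supremum $\lambda$. For a $k$-forest $(P;\leq,c)$, $\mathcal{L}(P)$ is the set of $k$-partitions $A:X\to k$ such that there are sets $B_p\in\mathcal{L}$ ($p\in P$) with $\bigcup_{p\in P}B_p=X$ and $A^{-1}(i)=\bigcup\{\tilde{B}_p\mid p\in P,\ c(p)=i\}$ for each $i<k$, where $\tilde{B}_p=B_p\setminus\bigcup_{q<p}B_q$. *)

(* Defs.v *)
From mathcomp Require Import all_boot.
From mathcomp Require Import boolp classical_sets.

Set Implicit Arguments.
Unset Strict Implicit.
Unset Printing Implicit Defensive.

Local Open Scope classical_set_scope.

Definition is_base (X : Type) (L : set (set X)) : Prop :=
  [/\ L setT,
      L set0,
      (forall A B, L A -> L B -> L (A `&` B)) &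
      (forall F : nat -> set X, (forall n, L (F n)) -> L (\bigcup_n F n))].

(* An ordinal alpha < omega_1 is the order type of a countable strict
   well-order (W, wlt).  The ordinals beta < alpha are the order types of
   the initial segments {y | wlt y x}, x : W.  A "segment" is
   [None] (the whole of W, i.e. alpha itself) or [Some x]
   (the initial segment strictly below x, i.e. the ordinal of x). *)
Definition countable_wellorder (W : Type) (wlt : W -> W -> Prop) : Prop :=
  [/\ (exists f : W -> nat, injective f),
      (forall x, ~ wlt x x),
      (forall x y z, wlt x y -> wlt y z -> wlt x z),
      (forall x y, [\/ wlt x y, x = y | wlt y x]) &
      well_founded wlt].

Definition inseg (W : Type) (wlt : W -> W -> Prop) (s : option W) (y : W) : Prop :=
  match s with None => True | Some x => wlt y x end.

(* [is_max wlt s m]: m is the greatest element of segment s, i.e. the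
   ordinal of s is (ordinal of m) + 1. *)
Definition is_max (W : Type) (wlt : W -> W -> Prop) (s : option W) (m : W) : Prop :=
  inseg wlt s m /\ forall y, inseg wlt s y -> y = m \/ wlt y m.

(* Parity r of the ordinal of a segment: [seg_parity s b] with b = true iff
   odd. *)
Inductive seg_parity (W : Type) (wlt : W -> W -> Prop) : option W -> bool -> Prop :=
  | par_nomax s : (forall m, ~ is_max wlt s m) -> seg_parity wlt s false
  | par_succ s m b : is_max wlt s m -> seg_parity wlt (Some m) b ->
      seg_parity wlt s (~~ b).

Definition Dop (X W : Type) (wlt : W -> W -> Prop) (A : W -> set X) : set X :=
  \bigcup_(b in [set b | exists rb ra, [/\ seg_parity wlt (Some b) rb,
                                          seg_parity wlt None ra & rb != ra]])
    (A b `\` \bigcup_(c in [set c | wlt c b]) A c).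

Definition Dclass (X W : Type) (wlt : W -> W -> Prop) (L : set (set X)) : set (set X) :=
  [set S | exists A : W -> set X, (forall b, L (A b)) /\ S = Dop wlt A].

(* 2-forests (labels in 2 = bool, with 0 = false, 1 = true)            *)

Record forest2 := Forest2 {
  fcar : Type;
  fle : fcar -> fcar -> Prop;
  flab : fcar -> bool }.

Definition flt (F : forest2) (q p : fcar F) : Prop := fle q p /\ q <> p.

Definition fsingle : forest2 := @Forest2 unit (fun _ _ => True) (fun _ => false).

Definition fcompl (F : forest2) : forest2 :=
  @Forest2 (fcar F) (@fle F) (fun p => ~~ flab p).

Definition fle_root (F : forest2) (x y : option (fcar F)) : Prop :=
  match y, x with
  | None, _ => True
  | Some _, None => False
  | Some y', Some x' => fle x' y'
  end.

Definition froot (i : bool) (F : forest2) : forest2 :=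
  @Forest2 (option (fcar F)) (@fle_root F)
    (fun x => match x with None => i | Some x' => flab x' end).

Inductive sum_le (Fs : nat -> forest2) : {n : nat & fcar (Fs n)} ->
    {n : nat & fcar (Fs n)} -> Prop :=
  | sum_le_intro n (x y : fcar (Fs n)) :
      fle x y -> @sum_le Fs (existT _ n x) (existT _ n y).

Definition fsum (Fs : nat -> forest2) : forest2 :=
  @Forest2 {n : nat & fcar (Fs n)} (@sum_le Fs) (fun a => flab (projT2 a)).

(* [IsT wlt s T]: T is (a choice of) the tree T_alpha where alpha is the
   ordinal of the segment s.  The limit clause allows ANY sequence of odd
   ordinals alpha_0 < alpha_1 < ... with supremum lambda. *)
Inductive IsT (W : Type) (wlt : W -> W -> Prop) : option W -> forest2 -> Prop :=
  | IsT_zero s : (forall y, ~ inseg wlt s y) -> IsT wlt s fsingle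
  | IsT_succ s m T : is_max wlt s m -> IsT wlt (Some m) T ->
      IsT wlt s (froot false (fcompl T))
  | IsT_lim s (x : nat -> W) (Ts : nat -> forest2) :
      (exists y, inseg wlt s y) ->
      (forall m, ~ is_max wlt s m) ->
      (forall n, inseg wlt s (x n)) ->
      (forall n, wlt (x n) (x n.+1)) ->
      (forall y, inseg wlt s y -> exists n, wlt y (x n)) ->
      (forall n, seg_parity wlt (Some (x n)) true) ->
      (forall n, IsT wlt (Some (x n)) (Ts n)) ->
      IsT wlt s (froot false (fsum (fun n => fcompl (Ts n)))).

Definition Btilde (X : Type) (P : forest2) (B : fcar P -> set X) (p : fcar P) : set X :=
  B p `\` \bigcup_(q in [set q | flt q p]) B q.

Definition Lforest (X : Type) (L : set (set X)) (P : forest2) : set (X -> bool) :=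
  [set f | exists B : fcar P -> set X,
     [/\ (forall p, L (B p)),
         \bigcup_p B p = setT &
         forall i : bool, f @^-1` [set i] = \bigcup_(p in [set p | flab p = i]) Btilde B p]].

Definition chi (X : Type) (A : set X) : X -> bool := fun x => `[< A x >].

(* Main.v *)
Require Import Defs.
From mathcomp Require Import all_boot.
From mathcomp Require Import boolp classical_sets.
From Stdlib Require Import Eqdep_dec PeanoNat.
Local Open Scope classical_set_scope.
Set Implicit Arguments.
Unset Strict Implicit.

Section Forest.
Variable X : Type.
Variable L : set (set X).

Definition tlb (P : forest2) (B : fcar P -> set X) (p : fcar P) (z : X) : Prop :=
  B p z /\ forall q, flt q p -> ~ B q z.
Definition labf (P : forest2) (B : fcar P -> set X) (j : bool) (z : X) : Prop :=
  exists p, flab p = j /\ tlb B p z.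
Definition covf (P : forest2) (B : fcar P -> set X) (z : X) : Prop :=
  exists p, B p z.
Definition Part (P : forest2) : Prop :=
  forall (B : fcar P -> set X) z, covf B z -> labf B true z \/ labf B false z.
Definition Rf (P : forest2) (d v : set X) : Prop :=
  exists B : fcar P -> set X, [/\ (forall p, L (B p)),
    (forall z, d z <-> labf B true z),
    (forall z, v z <-> covf B z) &
    (forall z, labf B true z -> labf B false z -> False)].

Lemma lab_cov P (B : fcar P -> set X) j z : labf B j z -> covf B z.
Proof. by case=> p [_ [h _]]; exists p. Qed.

Lemma lab_root i F (B : fcar (Defs.froot i F) -> set X) j z :
  labf B j z <-> labf (P:=F) (fun p => B (Some p)) j z \/
     (i = j /\ B None z /\ ~ covf (P:=F) (fun p => B (Some p)) z).
Proof.
split.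
- case=> [[p|]] [hl [hB hm]].
  + left; exists p; split => //; split => // q hq; apply: (hm (Some q)).
    by case: hq => h1 h2; split => //= -[].
  + right; split => //; split => // -[q hq].
    have hf : @flt (Defs.froot i F) (Some q) None by split.
    exact: (hm _ hf hq).
- case.
  + case=> p [hl [hB hm]]; exists (Some p); split => //; split => //.
    case=> [q|] [h1 h2] //; apply: (hm q); split => // e; apply: h2; by rewrite e.
  + case=> [<- [hB hc]]; exists None; split => //; split => //.
    case=> [q|] [h1 h2] // hq; by apply: hc; exists q.
Qed.

Lemma cov_root i F (B : fcar (Defs.froot i F) -> set X) z :
  covf B z <-> B None z \/ covf (P:=F) (fun p => B (Some p)) z.
Proof.
split; first by case=> [[p|] h]; [right; exists p|left].
by case=> [h|[p h]]; [exists None|exists (Some p)].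
Qed.

Lemma lab_compl F (B : fcar (fcompl F) -> set X) j z :
  labf B j z <-> labf (P:=F) B (~~ j) z.
Proof.
split; case=> p [hl h]; exists p; split => //=.
- by rewrite -hl /= negbK.
- by rewrite /= hl negbK.
Qed.

Lemma cov_compl F (B : fcar (fcompl F) -> set X) z :
  covf B z <-> covf (P:=F) B z.
Proof. by []. Qed.

Lemma sum_le_inv (Fs : nat -> forest2) q n (p : fcar (Fs n)) :
  @sum_le Fs q (existT _ n p) -> exists q', q = existT _ n q' /\ fle q' p.
Proof.
move=> H; remember (existT (fun n => fcar (Fs n)) n p) as b eqn:Hb.
destruct H as [m x y hxy].
have hmn : m = n by move: (f_equal (@projT1 _ _) Hb).
subst m.
have hyp := inj_pair2_eq_dec _ Nat.eq_dec _ _ _ _ Hb; subst y.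
by exists x.
Qed.

Lemma lab_sum Fs (B : fcar (fsum Fs) -> set X) j z :
  labf B j z <-> exists n, labf (P:=Fs n) (fun p => B (existT _ n p)) j z.
Proof.
split.
- case=> [[n p]] [hl [hB hm]]; exists n; exists p; split => //; split => // q [h1 h2].
  apply: (hm (existT _ n q)); split; first by constructor.
  by move=> /(inj_pair2_eq_dec _ Nat.eq_dec _ _ _ _).
- case=> n [p [hl [hB hm]]]; exists (existT _ n p); split => //; split => // q [h1 h2].
  have [q' [eq hq]] := sum_le_inv h1; subst q.
  apply: (hm q'); split => // hqp; apply: h2; by rewrite hqp.
Qed.

Lemma cov_sum Fs (B : fcar (fsum Fs) -> set X) z :
  covf B z <-> exists n, covf (P:=Fs n) (fun p => B (existT _ n p)) z.
Proof.
split; first by case=> [[n p] h]; exists n, p.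
by case=> n [p h]; exists (existT _ n p).
Qed.

Lemma lab_single (B : fcar fsingle -> set X) j z :
  labf B j z <-> j = false /\ B tt z.
Proof.
split; first by case=> [[]] [<- [h _]].
case=> -> h; exists tt; split => //; split => // -[] [_ h'] _; exact: h'.
Qed.

Lemma Part_single : Part fsingle.
Proof. move=> B z [[] h]; right; by apply/lab_single. Qed.

Lemma Part_compl F : Part F -> Part (fcompl F).
Proof.
move=> hP B z /cov_compl /hP [h|h].
- by right; apply/lab_compl.
- by left; apply/lab_compl.
Qed.

Lemma Part_root i F : Part F -> Part (Defs.froot i F).
Proof.
move=> hP B z /cov_root [h|h].
- have [hc|hc] := pselect (covf (P:=F) (fun p => B (Some p)) z).
  + by case: (hP _ _ hc) => h'; [left|right]; apply/lab_root; left.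
  + by case: i {hP} B h hc => B h hc; [left|right]; apply/lab_root; right.
- by case: (hP _ _ h) => h'; [left|right]; apply/lab_root; left.
Qed.

Lemma Part_sum Fs : (forall n, Part (Fs n)) -> Part (fsum Fs).
Proof.
move=> hP B z /cov_sum [n /hP [h|h]].
- by left; apply/lab_sum; exists n.
- by right; apply/lab_sum; exists n.
Qed.

Lemma Part_IsT (W : Type) (wlt : W -> W -> Prop) s T : IsT wlt s T -> Part T.
Proof.
elim=> {s T}.
- by move=> *; apply: Part_single.
- by move=> s m T _ _ hP; apply/Part_root/Part_compl.
- move=> s x Ts _ _ _ _ _ _ _ hP; apply/Part_root/Part_sum => n.
  exact/Part_compl.
Qed.


Lemma R_single d v : Rf fsingle d v <-> (forall z, ~ d z) /\ L v.
Proof.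
split.
- case=> B [hLB hd hv _]; split.
  + by move=> z /hd /lab_single [].
  + have -> : v = B tt; last exact: hLB.
    apply/funext => z; apply/propext; split => [/hv [[]] //|h]; apply/hv; by exists tt.
- case=> hd hLv; exists (fun _ => v); split => //.
  + by move=> z; split => [/hd []|/lab_single []].
  + by move=> z; split => [h|[_ h]] //; exists tt.
  + by move=> z /lab_single [].
Qed.

Lemma R_succ F d v : Part F -> (Rf (Defs.froot false (fcompl F)) d v <->
  exists o w C, [/\ Rf F o w, L C, (forall z, d z <-> w z /\ ~ o z) &
                    (forall z, v z <-> C z \/ w z)]).
Proof.
move=> hP; split.
- case=> B [hLB hd hv hdj].
  pose Bs : fcar F -> set X := fun p => B (Some p).
  have lt z : labf B true z <-> labf (P:=F) Bs false z.
  { split => [/lab_root [/lab_compl h|[]] //|h]; apply/lab_root; left; exact/lab_compl. }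
  have lf z : labf B false z <-> labf (P:=F) Bs true z \/ (B None z /\ ~ covf (P:=F) Bs z).
  { split => [/lab_root [/lab_compl h|[_ h]]|[h|h]]; [by left|by right| |].
    - by apply/lab_root; left; exact/lab_compl.
    - by apply/lab_root; right. }
  exists (labf (P:=F) Bs true), (covf (P:=F) Bs), (B None); split.
  + exists Bs; split => //; first by move=> p; apply: hLB.
    by move=> z h1 h2; apply: (hdj z); [apply/lt|apply/lf; left].
  + exact: hLB.
  + move=> z; split.
    * move=> /hd /lt h; split; first exact: lab_cov h.
      by move=> h'; apply: (hdj z); [apply/lt|apply/lf; left].
    * case=> hc hn; apply/hd/lt; by case: (hP _ _ hc).
  + move=> z; split => [/hv /cov_root //|h]; by apply/hv/cov_root.
- case=> o [w [C [[B' [hLB hd hv hdj]] hC hd' hv']]].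
  exists (fun q => match q with None => C | Some p => B' p end); split.
  + by case.
  + move=> z; split.
    * move=> /hd' [/hv hc hn]; case: (hP _ _ hc) => h; first by case: hn; apply/hd.
      by apply/lab_root; left; apply/lab_compl.
    * move=> /lab_root [/lab_compl h|[]//]; apply/hd'; split.
      - by apply/hv; exact: lab_cov h.
      - by move/hd => h'; exact: hdj h' h.
  + move=> z; split.
    * by move=> /hv' [h|/hv h]; apply/cov_root; [left|right].
    * by move=> /cov_root [h|/hv h]; apply/hv'; [left|right].
  + move=> z /lab_root [/lab_compl h1|[]//] /lab_root [/lab_compl h2|[_ [_ hc]]].
    * exact: hdj z h2 h1.
    * exact: hc (lab_cov h1).
Qed.

Lemma R_lim (Ts : nat -> forest2) d v : (forall n, Part (Ts n)) ->
 (Rf (Defs.froot false (fsum (fun n => fcompl (Ts n)))) d v <->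
  exists (o w : nat -> set X) C, [/\ (forall n, Rf (Ts n) (o n) (w n)),
    (forall n m z, w n z -> ~ o n z -> o m z -> False), L C,
    (forall z, d z <-> exists n, w n z /\ ~ o n z) &
    (forall z, v z <-> C z \/ exists n, w n z)]).
Proof.
move=> hP; split.
- case=> B [hLB hd hv hdj].
  pose Bn n : fcar (Ts n) -> set X := fun p => B (Some (existT _ n p)).
  have lt z : labf B true z <-> exists n, labf (Bn n) false z.
  { split.
    - by move=> /lab_root [/lab_sum [n /lab_compl h] | [] //]; exists n.
    - by case=> n h; apply/lab_root; left; apply/lab_sum; exists n; exact/lab_compl. }
  have lf z : labf B false z <-> (exists n, labf (Bn n) true z) \/
                (B None z /\ ~ exists n, covf (Bn n) z).
  { split.
    - move=> /lab_root [/lab_sum [n /lab_compl h]|[_ [hB hc]]]; first by left; exists n.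
      by right; split => // -[n hn]; apply: hc; apply/cov_sum; exists n.
    - case=> [[n h]|[hB hc]]; apply/lab_root.
      + by left; apply/lab_sum; exists n; exact/lab_compl.
      + by right; split => //; split => // /cov_sum. }
  exists (fun n => labf (Bn n) true), (fun n => covf (Bn n)), (B None); split.
  + move=> n; exists (Bn n); split => //; first by move=> p; apply: hLB.
    move=> z h1 h2; apply: (hdj z); [apply/lt; by exists n|apply/lf; left; by exists n].
  + move=> n m z hw hn ho; apply: (hdj z).
    * apply/lt; exists n; by case: (hP n _ _ hw).
    * by apply/lf; left; exists m.
  + exact: hLB.
  + move=> z; split.
    * move=> /hd /lt [n h]; exists n; split; first exact: lab_cov h.
      move=> h'; apply: (hdj z); [apply/lt; by exists n|apply/lf; left; by exists n].
    * case=> n [hc hn]; apply/hd/lt; exists n; by case: (hP n _ _ hc).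
  + move=> z; split.
    * move=> /hv /cov_root [h|/cov_sum h]; [by left|by right].
    * by case=> [h|h]; apply/hv/cov_root; [left|right; apply/cov_sum].
- case=> o [w [C [hR hx hC hd hv]]].
  pose Bs n : fcar (Ts n) -> set X := proj1_sig (cid (hR n)).
  have hBs n : [/\ (forall p, L (Bs n p)), (forall z, o n z <-> labf (Bs n) true z),
    (forall z, w n z <-> covf (Bs n) z) &
    (forall z, labf (Bs n) true z -> labf (Bs n) false z -> False)].
  { exact: (proj2_sig (cid (hR n))). }
  exists (fun q => match q with None => C | Some (existT n p) => Bs n p end); split.
  + by case=> [[n p]|] //; case: (hBs n).
  + move=> z; split.
    * move=> /hd [n [hw hn]]; case: (hBs n) => _ ho hw' _.
      case: (hP n _ _ (proj1 (hw' z) hw)) => h; first by case: hn; apply/ho.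
      by apply/lab_root; left; apply/lab_sum; exists n; apply/lab_compl.
    * move=> /lab_root [/lab_sum [n /lab_compl h]|[]//]; apply/hd; exists n.
      case: (hBs n) => _ ho hw' hdj; split.
      - by apply/hw'; exact: lab_cov h.
      - by move/ho => h'; exact: hdj z h' h.
  + move=> z; split.
    * move=> /hv [h|[n hw]]; apply/cov_root; first by left.
      right; apply/cov_sum; exists n; case: (hBs n) => _ _ hw' _; exact/hw'.
    * move=> /cov_root [h|/cov_sum [n h]]; apply/hv; first by left.
      right; exists n; case: (hBs n) => _ _ hw' _; exact/hw'.
  + move=> z /lab_root [/lab_sum [n /lab_compl h1]|[]//].
    move=> /lab_root [/lab_sum [m /lab_compl h2]|[_ [_ hc]]].
    * case: (hBs n) (hBs m) => _ hon hwn _ [_ hom _ _].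
      apply: (hx n m z); [apply/hwn; exact: lab_cov h1| |by apply/hom].
      by move=> /hon h'; case: (hBs n) => _ _ _ hdj; exact: hdj z h' h1.
    * by apply: hc; apply/cov_sum; exists n; exact: lab_cov h1.
Qed.

End Forest.

Lemma bneq (r p : bool) : ~ r = p -> r = ~~ p.
Proof. by case: r; case: p => // h; case: h. Qed.

Section Ord.
Variable X : Type.
Variable L : set (set X).
Hypothesis hL : is_base L.
Variable W : Type.
Variable wlt : W -> W -> Prop.
Hypothesis hW : countable_wellorder wlt.

Local Notation par := (seg_parity wlt).

Lemma wirr x : ~ wlt x x. Proof. by case: hW. Qed.
Lemma wtr x y z : wlt x y -> wlt y z -> wlt x z.
Proof. case: hW => _ _ h _ _; exact: h. Qed.
Lemma wtri x y : [\/ wlt x y, x = y | wlt y x].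
Proof. by case: hW => _ _ _ h _. Qed.
Lemma wwf : well_founded wlt.
Proof. by case: hW. Qed.

Lemma wmin (P : W -> Prop) : (exists b, P b) -> exists b, P b /\ forall c, wlt c b -> ~ P c.
Proof.
move=> [b hb]; apply: contrapT => hn.
suff : forall b, ~ P b by move/(_ b).
move=> b'; elim/(well_founded_ind wwf): b' => b' IH hb'.
by apply: hn; exists b'; split => // c hc; exact: IH.
Qed.

Lemma min_uniq (P : W -> Prop) b b' : P b -> (forall c, wlt c b -> ~ P c) ->
  P b' -> (forall c, wlt c b' -> ~ P c) -> b = b'.
Proof.
move=> hb hm hb' hm'; case: (wtri b b') => [h|//|h].
- by case: (hm' _ h hb).
- by case: (hm _ h hb').
Qed.

Lemma inseg_trans s b c : wlt b c -> inseg wlt s c -> inseg wlt s b.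
Proof. case: s => //= x hbc hcx; exact: wtr hbc hcx. Qed.

Lemma max_uniq s m m' : is_max wlt s m -> is_max wlt s m' -> m = m'.
Proof.
case=> hm hm1 [hm2 hm2']; case: (hm1 _ hm2) => // h; case: (hm2' _ hm) => // h'.
by case: (wirr (wtr h h')).
Qed.

Lemma par_fun s b1 b2 : par s b1 -> par s b2 -> b1 = b2.
Proof.
move=> h; elim: h b2 => {s b1}.
- move=> s hn b2 h2; case: h2 hn => // s' m b hm _ hn.
  by case: (hn m).
- move=> s m b hm hp IH b2 h2; case: h2 hm hp IH => [s' hn hm|s' m' b' hm' hp' hm hp IH].
  + by case: (hn m).
  + have e := max_uniq hm hm'; subst m'.
    by rewrite (IH _ hp').
Qed.

Lemma par_tot s : exists b, par s b.
Proof.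
have hS : forall x, exists b, par (Some x) b.
{ move=> x; elim/(well_founded_ind wwf): x => x IH.
  case: (pselect (exists m, is_max wlt (Some x) m)) => [[m hm]|hn].
  - have [b hb] := IH m hm.1; exists (~~ b); exact: par_succ hm hb.
  - exists false; apply: par_nomax => m hm; apply: hn; by exists m. }
case: s => [x|]; first exact: hS.
case: (pselect (exists m, is_max wlt None m)) => [[m hm]|hn].
- have [b hb] := hS m; exists (~~b); exact: par_succ hm hb.
- exists false; apply: par_nomax => m hm; apply: hn; by exists m.
Qed.

Definition Dm (s : option W) (A : W -> set X) (z : X) : Prop :=
  exists b, [/\ inseg wlt s b, (exists rb rs, [/\ par (Some b) rb, par s rs & rb != rs]),
    A b z & forall c, wlt c b -> ~ A c z].
Definition Um (s : option W) (A : W -> set X) (z : X) : Prop :=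
  exists b, inseg wlt s b /\ A b z.
Definition DR (s : option W) (d v : set X) : Prop :=
  exists A C, [/\ (forall b, L (A b)), L C, (forall z, d z <-> Dm s A z) &
                 (forall z, v z <-> Um s A z \/ C z)].

Lemma Dm_iff s ps A z : par s ps -> (Dm s A z <->
  exists b, [/\ inseg wlt s b, par (Some b) (~~ ps), A b z & forall c, wlt c b -> ~ A c z]).
Proof.
move=> hs; split.
- case=> b [hb [rb [rs [hrb hrs hne]]] hA hm]; exists b; split => //.
  have e := par_fun hrs hs; subst rs.
  have <- : rb = ~~ ps by apply: bneq => e; move: hne; rewrite e eqxx.
  done.
- case=> b [hb hp hA hm]; exists b; split => //; exists (~~ps), ps; split => //.
  by case: (ps).
Qed.

Lemma Lunion2 (S T : set X) : L S -> L T -> L (fun z => S z \/ T z).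
Proof.
case: hL => _ _ _ hU hS hT.
have -> : (fun z => S z \/ T z) = \bigcup_n (if n is 0 then S else T).
{ apply/funext => z; apply/propext.
  split => [[h|h]|[[|n] _ h]]; [by exists 0|by exists 1|by left|by right]. }
by apply: hU; case.
Qed.

Lemma Lbig s (A : W -> set X) : (forall b, L (A b)) -> L (Um s A).
Proof.
case: hL => _ h0 _ hU; case: hW => [[f hf] _ _ _ _] hA.
have -> : Um s A = \bigcup_k (fun z => exists b, [/\ inseg wlt s b, f b = k & A b z]).
{ apply/funext => z; apply/propext.
  split => [[b [hb h]]|[k _ [b [hb _ h]]]]; [by exists (f b) => //; exists b|by exists b]. }
apply: hU => k.
case: (pselect (exists b, inseg wlt s b /\ f b = k)) => [[b [hb hk]]|hn].
- have -> : (fun z => exists b, [/\ inseg wlt s b, f b = k & A b z]) = A b; last exact: hA.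
  apply/funext => z; apply/propext; split => [[b' [hb' hk' h]]|h]; last by exists b.
  have e : b' = b by apply: hf; rewrite hk hk'.
  by rewrite -e.
- have -> : (fun z => exists b, [/\ inseg wlt s b, f b = k & A b z]) = set0; last done.
  apply/funext => z; apply/propext; split => [[b [hb hk h]]|//]; apply: hn; by exists b.
Qed.

Lemma agree m (A A' : W -> set X) z : (forall b, wlt b m -> (A b z <-> A' b z)) ->
  (Dm (Some m) A z <-> Dm (Some m) A' z) /\ (Um (Some m) A z <-> Um (Some m) A' z).
Proof.
move=> h; split; split.
- case=> b [hb hp hA hmin]; exists b; split => //; first exact/h.
  move=> c hc hc'; apply: (hmin c hc); apply/(h c (wtr hc hb)); exact: hc'.
- case=> b [hb hp hA hmin]; exists b; split => //; first exact/h.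
  move=> c hc hc'; apply: (hmin c hc); apply/(h c (wtr hc hb)); exact: hc'.
- by case=> b [hb hA]; exists b; split => //; apply/h.
- by case=> b [hb hA]; exists b; split => //; apply/h.
Qed.

Lemma succD s m A z : is_max wlt s m ->
  (Um s A z <-> A m z \/ Um (Some m) A z) /\
  (Dm s A z <-> (A m z \/ Um (Some m) A z) /\ ~ Dm (Some m) A z).
Proof.
move=> hm; case: (hm) => hms hmax.
have [pm hpm] := par_tot (Some m).
have hps : par s (~~ pm) := par_succ hm hpm.
split.
- split.
  + case=> b [hb h]; case: (hmax b hb) => [e|hlt]; [left; by rewrite -e | right; by exists b].
  + case=> [h|[b [hb h]]]; [by exists m| exists b; split => //; exact: inseg_trans hb hms].
- split.
  + move=> /(Dm_iff _ _ hps) [b [hb hp hA hmin]]; rewrite negbK in hp.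
    case: (hmax b hb) => [e|hlt].
    * subst b; split; first by left.
      move=> /(Dm_iff _ _ hpm) [b' [hb' _ hA' _]]; exact: hmin b' hb' hA'.
    * split; first by right; exists b.
      move=> /(Dm_iff _ _ hpm) [b' [hb' hp' hA' hmin']].
      have e := min_uniq hA hmin hA' hmin'; subst b'.
      have := par_fun hp hp'; by case: (pm).
  + case=> hu hn; apply/(Dm_iff _ _ hps).
    have hex : exists b, A b z by case: hu => [h|[b [_ h]]]; [exists m|exists b].
    have [b0 [hA0 hmin0]] := wmin hex.
    have hle : b0 = m \/ wlt b0 m.
    { case: hu => [h|[b [hb h]]].
      - case: (wtri b0 m) => [h'|e|h']; [by right|by left|by case: (hmin0 _ h' h)].
      - right; case: (wtri b0 b) => [h'|e|h']; [exact: wtr h' hb|by rewrite e|by case: (hmin0 _ h' h)]. }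
    exists b0; split => //.
    * case: hle => [->//|h]; exact: inseg_trans h hms.
    * rewrite negbK; case: hle => [->//|hlt].
      have [r hr] := par_tot (Some b0).
      suff e : r = pm by rewrite -e.
      apply: contrapT => hne; apply: hn; apply/(Dm_iff _ _ hpm); exists b0; split => //.
      by rewrite -(bneq hne).
Qed.


Lemma mainL s T : IsT wlt s T -> forall d v, Rf L T d v <-> DR s d v.
Proof.
elim=> {s T}.
- move=> s hs d v; split.
  + move=> /R_single [hd hv]; exists (fun _ => set0), v; split => //.
    * by case: hL.
    * move=> z; split => [/hd //|[b [hb _ _ _]]]; by case: (hs b).
    * move=> z; split => [h|[[b [hb _]]|h]]; [by right|by case: (hs b)|done].
  + case=> A [C [hA hC hd hv]]; apply/R_single; split.
    * move=> z /hd [b [hb _ _ _]]; by case: (hs b).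
    * have -> : v = C; last done.
      apply/funext => z; apply/propext; split => [/hv [[b [hb _]]|//]|h]; first by case: (hs b).
      by apply/hv; right.
- move=> s m T hm hT IH d v.
  apply: iff_trans; first exact: (R_succ L d v (Part_IsT (X:=X) hT)).
  split.
  + case=> o [w [C [/IH [A [C' [hA hC' ho hw]]] hC hd hv]]].
    pose A' b := if pselect (b = m) then C' else A b.
    have hA'm : A' m = C' by rewrite /A'; case: pselect => // h; exfalso; exact: h erefl.
    have hag z : forall b, wlt b m -> (A b z <-> A' b z).
    { move=> b hb; rewrite /A'; case: pselect => // e; subst b; by case: (wirr hb). }
    exists A', C; split => //.
    * move=> b; rewrite /A'; destruct (pselect (b = m)); [exact: hC'|exact: hA].
    * move=> z; have [hU hD] := succD A' z hm; have [hD' hU'] := agree (hag z).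
      split.
      - move=> /hd [/hw hw' hn]; apply/hD; split.
        + case: hw' => [/hU' h|h]; [by right|by left; rewrite hA'm].
        + by move=> /hD' /ho.
      - move=> /hD [hu hn]; apply/hd; split.
        + apply/hw; case: hu => [h|/hU' h]; [right; by rewrite -hA'm | by left].
        + by move=> /ho /hD'.
    * move=> z; have [hU hD] := succD A' z hm; have [hD' hU'] := agree (hag z).
      split.
      - move=> /hv [h|/hw [/hU' h|h]]; [by right| left; apply/hU; by right|].
        by left; apply/hU; left; rewrite hA'm.
      - move=> [/hU [h|/hU' h]|h]; apply/hv; last by left.
        + by right; apply/hw; right; rewrite -hA'm.
        + by right; apply/hw; left.
  + case=> A [C [hA hC hd hv]].
    exists (Dm (Some m) A), (fun z => Um (Some m) A z \/ A m z), C; split => //.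
    * by apply/IH; exists A, (A m); split.
    * move=> z; have [hU hD] := succD A z hm; split.
      - move=> /hd /hD [hu hn]; split => //; by case: hu; [right|left].
      - case=> hw hn; apply/hd/hD; split => //; by case: hw; [right|left].
    * move=> z; have [hU hD] := succD A z hm; split.
      - move=> /hv [/hU [h|h]|h]; [by right; right|by right; left|by left].
      - move=> [h|[h|h]]; apply/hv; [by right|by left; apply/hU; right|by left; apply/hU; left].
- move=> s x Ts hne hnm hxs hinc hcof hodd hT IH d v.
  apply: iff_trans; first exact: (R_lim L d v (fun n => Part_IsT (X:=X) (hT n))).
  have hps : par s false := par_nomax hnm.
  split.
  + case=> o [w [C [hR hx hC hd hv]]].
    have hD n : DR (Some (x n)) (o n) (w n) by apply/IH.
    pose An n := sval (cid (hD n)).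
    have hAn n : exists C, [/\ (forall b, L (An n b)), L C,
        (forall z, o n z <-> Dm (Some (x n)) (An n) z) &
        (forall z, w n z <-> Um (Some (x n)) (An n) z \/ C z)] := svalP (cid (hD n)).
    have hLA n b : L (An n b) by case: (hAn n) => ? [].
    have ho n z : o n z <-> Dm (Some (x n)) (An n) z by case: (hAn n) => ? [].
    have hLw n : L (w n).
    { case: (hAn n) => Cn [_ hCn _ hw].
      have -> : w n = fun z => Um (Some (x n)) (An n) z \/ Cn z.
      { by apply/funext => z; apply/propext. }
      apply: Lunion2 => //; exact: Lbig. }
    have hwU n z : Um (Some (x n)) (An n) z -> w n z.
    { by case: (hAn n) => Cn [_ _ _ hw] h; apply/hw; left. }
    pose A' b z := exists n, (wlt b (x n) /\ An n b z) \/ (b = x n /\ w n z).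
    have hA'E b z : A' b z -> exists n, (wlt b (x n) /\ An n b z) \/ (b = x n /\ w n z).
    { by []. }
    exists A', C; split => //.
    * move=> b; case: hL => _ h0 _ hU.
      have -> : A' b = \bigcup_n (fun z => (wlt b (x n) /\ An n b z) \/ (b = x n /\ w n z)).
      { apply/funext => z; apply/propext; split => [[n h]|[n _ h]]; by exists n. }
      apply: hU => n.
      case: (pselect (wlt b (x n))) => hb.
      - have -> : (fun z => (wlt b (x n) /\ An n b z) \/ (b = x n /\ w n z)) = An n b.
        { apply/funext => z; apply/propext; split => [[[_ h]|[e _]]|h] //; last by left.
          by subst b; case: (wirr hb). }
        exact: hLA.
      - case: (pselect (b = x n)) => e.
        + have -> : (fun z => (wlt b (x n) /\ An n b z) \/ (b = x n /\ w n z)) = w n.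
          { apply/funext => z; apply/propext.
            split => [[[h _]|[_ h]]|h]; [by case: (hb h)|done|by right]. }
          exact: hLw.
        + have -> : (fun z => (wlt b (x n) /\ An n b z) \/ (b = x n /\ w n z)) = set0;
            last done.
          apply/funext => z; apply/propext; split => [[[h _]|[h _]]|//].
          * by case: (hb h).
          * by case: (e h).
    * move=> z; split.
      - move=> /hd [n [hw hn]]; apply/(Dm_iff _ _ hps).
        have hex : exists b, A' b z by exists (x n), n; right.
        have [b0 [hA0 hmin0]] := wmin hex.
        case: (hA0) => k hk.
        have hle : b0 = x n \/ wlt b0 (x n).
        { case: (wtri b0 (x n)) => [h'|e|h']; [by right|by left|].
          by case: (hmin0 _ h'); exists n; right. }
        exists b0; split => //.
        + case: hle => [->//|h]; exact: inseg_trans h (hxs n).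
        + case: hk => [[hlt hAk]|[e _]]; last by rewrite e; exact: hodd k.
          have [r hr] := par_tot (Some b0).
          suff e : r = true by move: hr; rewrite e => h; exact: h.
          apply: contrapT => hnr.
          have hok : o k z.
          { apply/ho/(Dm_iff _ _ (hodd k)); exists b0; split => //.
            - by rewrite -(bneq hnr).
            - move=> c hc hAc; apply: (hmin0 c hc); exists k; left; split => //.
              exact: wtr hc hlt. }
          exact: hx n k z hw hn hok.
      - move=> /(Dm_iff _ _ hps) [b [hb hp hA'b hmin]].
        case: (hA'E _ _ hA'b) => n hn; apply/hd; exists n.
        have hw : w n z.
        { case: hn => [[hlt hA]|[_ h]] //; apply: hwU; by exists b. }
        split => // /ho /(Dm_iff _ _ (hodd n)) [c [hc hpc hAc hminc]].
        have hA'c : A' c z by exists n; left.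
        case: (wtri b c) => [hbc|e|hcb].
        + case: hn => [[hlt hA]|[e _]].
          * exact: hminc b hbc hA.
          * by subst b; case: (wirr (wtr hbc hc)).
        + subst c; by have := par_fun hp hpc.
        + exact: hmin c hcb hA'c.
    * move=> z; split.
      - move=> /hv [h|[n hw]]; [by right|left].
        by exists (x n); split; [exact: hxs|exists n; right].
      - move=> [[b [hb hA'b]]|h]; apply/hv; last by left.
        right; case: (hA'E _ _ hA'b) => n [[hlt hA]|[_ hw]].
        + by exists n; apply: hwU; exists b.
        + by exists n.
  + case=> A [C [hA hC hd hv]].
    exists (fun n => Dm (Some (x n)) A), (fun n => Um (Some (x n)) A), C; split => //.
    * move=> n; apply/IH; exists A, set0; split => //; first by case: hL.
      by move=> z; split => [h|[h|//]]; [left|].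
    * move=> n m z [b [hb hAb]] hn /(Dm_iff _ _ (hodd m)) [c [hc hpc hAc hminc]].
      apply: hn; apply/(Dm_iff _ _ (hodd n)); exists c; split => //.
      case: (wtri c b) => [h|e|h]; [exact: wtr h hb|by rewrite e|by case: (hminc _ h hAb)].
    * move=> z; split.
      - move=> /hd /(Dm_iff _ _ hps) [b [hb hp hAb hmin]].
        have [n hn] := hcof b hb; exists n; split; first by exists b.
        move=> /(Dm_iff _ _ (hodd n)) [c [hc hpc hAc hminc]].
        have e := min_uniq hAb hmin hAc hminc; subst c.
        by have := par_fun hp hpc.
      - case=> n [[b [hb hAb]] hn]; apply/hd/(Dm_iff _ _ hps).
        have hex : exists b, A b z by exists b.
        have [b0 [hA0 hmin0]] := wmin hex.
        have hlt : wlt b0 (x n).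
        { case: (wtri b0 b) => [h|e|h]; [exact: wtr h hb|by rewrite e|by case: (hmin0 _ h hAb)]. }
        exists b0; split => //; first exact: inseg_trans hlt (hxs n).
        have [r hr] := par_tot (Some b0).
        suff e : r = true by move: hr; rewrite e => h; exact: h.
        apply: contrapT => hnr; apply: hn; apply/(Dm_iff _ _ (hodd n)); exists b0; split => //.
        by rewrite -(bneq hnr).
    * move=> z; split.
      - move=> /hv [[b [hb hAb]]|h]; [right|by left].
        have [n hn] := hcof b hb; by exists n; exists b.
      - move=> [h|[n [b [hb hAb]]]]; apply/hv; [by right|left].
        by exists b; split => //; exact: inseg_trans hb (hxs n).
Qed.

End Ord.

Lemma chiT (X : Type) (A : set X) z : chi A z = true <-> A z.
Proof. by rewrite /chi; case: asboolP. Qed.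
Lemma chiF (X : Type) (A : set X) z : chi A z = false <-> ~ A z.
Proof. by rewrite /chi; case: asboolP. Qed.
Lemma eq_iff (X : Type) (S T : set X) : S = T -> forall z, S z <-> T z.
Proof. by move=> ->. Qed.
Lemma bigcup_lab (X : Type) (P : forest2) (B : fcar P -> set X) j z :
  (\bigcup_(p in [set p | flab p = j]) Btilde B p) z <-> labf B j z.
Proof.
split.
- case=> p hp [hB hn]; exists p; split => //; split => // q hq hq'; apply: hn; by exists q.
- case=> p [hp [hB hn]]; exists p => //; split => // -[q hq hq']; exact: hn q hq hq'.
Qed.

Theorem proposition4p10 (X : Type) (L : set (set X)) (hL : is_base L)
  (W : Type) (wlt : W -> W -> Prop) (hW : countable_wellorder wlt)
  (T : forest2) (hT : IsT wlt None T) :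
  forall A : set X, Lforest L T (chi A) <-> Dclass wlt L A.
Proof.
move=> A.
have hP := Part_IsT (X:=X) hT.
have hM := mainL hL hW hT.
have step1 : Lforest L T (chi A) <-> Rf L T A setT.
{ split.
  - case=> B [hLB hcov hlab]; exists B; split => //.
    + move=> z; have e := eq_iff (hlab true) z; split.
      * by move=> /chiT /e /bigcup_lab.
      * by move=> /bigcup_lab /e /chiT.
    + move=> z; have e := eq_iff hcov z; split.
      * by move=> /e [p _ h]; exists p.
      * by case=> p h.
    + move=> z h1 h2.
      have /chiT e1 : chi A z = true by apply/(eq_iff (hlab true) z)/bigcup_lab.
      have /chiF e2 : chi A z = false by apply/(eq_iff (hlab false) z)/bigcup_lab.
      exact: e2 e1.
  - case=> B [hLB hd hv hdj]; exists B; split => //.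
    + apply/funext => z; apply/propext; split => // _.
      have [p h] : covf B z by apply/hv.
      by exists p.
    + case; apply/funext => z; apply/propext; split.
      * by move=> /chiT /hd /bigcup_lab.
      * by move=> /bigcup_lab /hd /chiT.
      * move=> /chiF hn; apply/bigcup_lab.
        have hc : covf B z by apply/hv.
        by case: (hP B z hc) => // /hd.
      * move=> /bigcup_lab h; apply/chiF => hA; exact: hdj z (proj1 (hd z) hA) h. }
have step2 : Dclass wlt L A <-> DR L wlt None A setT.
{ split.
  - case=> A' [hA' ->]; exists A', setT; split => //; first by case: hL.
    + move=> z; split.
      * case=> b [rb [ra [h1 h2 h3]]] [hB hn].
        exists b; split => //; first by exists rb, ra.
        move=> c hc hc'; apply: hn; by exists c.
      * case=> b [_ [rb [rs [h1 h2 h3]]] hB hn].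
        exists b; first by exists rb, rs.
        split => // -[c hc hc']; exact: hn c hc hc'.
    + by move=> z; split => // _; right.
  - case=> A' [C [hA' hC hd hv]]; exists A'; split => //.
    apply/funext => z; apply/propext; split.
    + move=> /hd [b [_ [rb [rs [h1 h2 h3]]] hB hn]].
      exists b; first by exists rb, rs.
      split => // -[c hc hc']; exact: hn c hc hc'.
    + case=> b [rb [ra [h1 h2 h3]]] [hB hn].
      apply/hd; exists b; split => //; first by exists rb, ra.
      move=> c hc hc'; apply: hn; by exists c. }
apply: iff_trans step1 _; apply: iff_trans (hM A setT) _.
exact: iff_sym step2.
Qed.
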